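(* Let $\mathcal{G}=(\mathcal{V},\mathcal{E})$ be an unweighted finite simple graph and $f:\mathcal{V}\to\mathbb{R}$ a filtering function. Let $u\in\mathcal{V}$ be dominated by $v\in\mathcal{V}$ with $f(u)\leq f(v)$. Then for every $k\ge 0$, the $k$-th persistence diagrams of the superlevel filtrations of $\mathcal{G}$ and of $\mathcal{G}-\{u\}$ (with $f$ restricted and the same thresholds) coincide: $PD^{\mathrm{v}}_k(\mathcal{G},f)=PD^{\mathrm{v}}_k(\mathcal{G}-\{u\},f)$. In particular, if $f$ is the degree function of $\mathcal{G}$, this holds for every dominated vertex $u$.
   Context: $N(w)$ is the closed neighborhood of $w$; $u$ is dominated by $v\ne u$ if $N(u)\subset N(v)$. $\mathcal{G}-\{u\}$ deletes $u$ and its incident edges. With thresholds $\alpha_0<\dots<\alpha_m$ spanning the range of $f$, the superlevel filtration consists of the clique (flag) complexes of the subgraphs induced by $\{w: f(w)\ge\alpha_i\}$, ordered by decreasing $\alpha_i$; $PD^{\mathrm{v}}_k$ is the $k$-th persistence diagram (field coefficients) of this filtration. *)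

(* Defs.v *)
From mathcomp Require Import all_boot all_order all_algebra.
Set Implicit Arguments. Unset Strict Implicit. Unset Printing Implicit Defensive.
Import Order.TTheory GRing.Theory Num.Theory.
Local Open Scope ring_scope.

(* A finite simple graph: vertex type V (a finType) and a symmetric,
   irreflexive adjacency relation e. Subgraphs induced on a vertex set
   S : {set V} are handled by keeping the ambient type V. *)

Definition closed_nbhd (V : finType) (e : rel V) (w : V) : {set V} :=
  [set x | (x == w) || e w x].

Definition dominated (V : finType) (e : rel V) (u v : V) : Prop :=
  v != u /\ closed_nbhd e u \subset closed_nbhd e v.

Definition degree_fun (R : numDomainType) (V : finType) (e : rel V) : V -> R :=
  fun w => (#|[set x | e w x]|)%:R.

Definition is_clique (V : finType) (e : rel V) (s : {set V}) : bool :=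
  [forall x in s, forall y in s, (x != y) ==> e x y].

Definition simplex (V : finType) (e : rel V) (S : {set V}) (k : nat)
    (s : {set V}) : bool :=
  [&& s \subset S, #|s| == k.+1 & is_clique e s].

(* Chains: row vectors indexed by all subsets of V (via enum_rank);
   C_k(K) is the row space spanned by the basis vectors of k-simplices. *)
Definition chains (F : fieldType) (V : finType) (e : rel V) (S : {set V})
    (k : nat) : 'M[F]_#|{set V}| :=
  (\sum_(s | simplex e S k s) <<@delta_mx F 1 #|{set V}| ord0 (enum_rank s)>>)%MS.

(* coefficient of the face t in the (ordered, via enum_rank) boundary of s:
   d[v_0..v_k] = sum_i (-1)^i [v_0..^v_i..v_k], non-augmented *)
Definition bdry_coef (F : fieldType) (V : finType) (s t : {set V}) : F :=
  \sum_(v in s)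
     if (t == s :\ v) && (t != set0)
     then (-1) ^+ #|[set w in t | (enum_rank w < enum_rank v)%N]|
     else 0.

(* boundary operator acting on row vectors: c |-> c *m bdry_mx *)
Definition bdry_mx (F : fieldType) (V : finType) : 'M[F]_#|{set V}| :=
  \matrix_(i, j) bdry_coef F (enum_val i) (enum_val j).

Definition cycles (F : fieldType) (V : finType) (e : rel V) (S : {set V})
    (k : nat) : 'M[F]_#|{set V}| :=
  (chains F e S k :&: kermx (bdry_mx F V))%MS.

Definition boundaries (F : fieldType) (V : finType) (e : rel V) (S : {set V})
    (k : nat) : 'M[F]_#|{set V}| :=
  (chains F e S k.+1 *m bdry_mx F V)%MS.

Definition level (R : numDomainType) (V : finType) (W : {set V}) (f : V -> R)
    (alpha : R) : {set V} :=
  [set w in W | alpha <= f w].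

(* i-th step of the superlevel filtration (i = 0..m), thresholds
   a 0 < ... < a m taken in decreasing order *)
Definition filt (R : numDomainType) (V : finType) (W : {set V}) (f : V -> R)
    (m : nat) (a : nat -> R) (i : nat) : {set V} :=
  level W f (a (m - i)%N).

(* persistent Betti numbers: rank of H_k(K_i) -> H_k(K_j), i <= j <= m,
   = dim((Z_k(K_i) + B_k(K_j)) / B_k(K_j)); 0 outside this range *)
Definition pbetti (F : fieldType) (R : numDomainType) (V : finType) (e : rel V)
    (W : {set V}) (f : V -> R) (m : nat) (a : nat -> R) (k i j : nat) : nat :=
  if (i <= j <= m)%N then
    (\rank (cycles F e (filt W f m a i) k + boundaries F e (filt W f m a j) k)%MS
     - \rank (boundaries F e (filt W f m a j) k))%N
  else 0%N.

(* k-th persistence diagram, as the multiplicity function of points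
   (birth index i, death index j), 0 <= i < j <= m+1, j = m+1 meaning
   "never dies" (infinity):
   mu^{i,j} = b^{i,j-1} - b^{i,j} - b^{i-1,j-1} + b^{i-1,j}. *)
Definition PD (F : fieldType) (R : numDomainType) (V : finType) (e : rel V)
    (W : {set V}) (f : V -> R) (m : nat) (a : nat -> R) (k : nat)
    : nat -> nat -> int :=
  fun i j =>
  let b := pbetti F e W f m a k in
  if (i < j <= m.+1)%N then
    ((b i j.-1)%:Z - (b i j)%:Z)
    - (if i is i'.+1 then (b i' j.-1)%:Z - (b i' j)%:Z else 0)
  else 0.

(* Main.v *)
Require Import Defs.
From mathcomp Require Import all_boot all_order all_algebra.
From mathcomp Require Import ring zify.
From Stdlib Require Import FunctionalExtensionality.
Set Implicit Arguments. Unset Strict Implicit. Unset Printing Implicit Defensive.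
Import Order.TTheory GRing.Theory Num.Theory.
Local Open Scope ring_scope.

Definition nb (V : finType) (t : {set V}) (x : V) : nat :=
  #|[set w in t | (enum_rank w < enum_rank x)%N]|.
Definition sg (F : fieldType) (V : finType) (t : {set V}) (x : V) : F :=
  (-1) ^+ nb t x.

Lemma nb_D1 (V : finType) (t : {set V}) y z : y \in t ->
  nb t z = ((enum_rank y < enum_rank z)%N + nb (t :\ y) z)%N.
Proof.
move=> yt; rewrite /nb (cardsD1 y) !inE yt /=; congr (_ + _)%N.
by apply: eq_card => w; rewrite !inE andbA.
Qed.

Lemma sgsq (F : fieldType) (V : finType) (t : {set V}) x :
  sg F t x * sg F t x = 1.
Proof. by rewrite /sg -exprD -signr_odd addnn odd_double. Qed.

Lemma ltb_sum (V : finType) (x y : V) : x != y ->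
  ((enum_rank x < enum_rank y)%N + (enum_rank y < enum_rank x)%N = 1)%N.
Proof.
move=> nxy; have : (nat_of_ord (enum_rank x) != enum_rank y).
  by apply: contra nxy => /eqP/val_inj/enum_rank_inj ->.
by case: (ltngtP (enum_rank x) (enum_rank y)).
Qed.

Lemma sign_cancel (F : fieldType) (b1 b2 : bool) (n : nat) :
  (b1 + b2 = 1)%N -> (-1) ^+ (b1 + n) + (-1) ^+ (b2 + n) = 0 :> F.
Proof. by case: b1; case: b2 => //= _; rewrite !add0n exprS; ring. Qed.

Lemma Df_sum (F : fieldType) (V : finType) (s : {set V}) (g : {set V} -> F) :
  \sum_(t : {set V}) bdry_coef F s t * g t =
  \sum_(x in s) (if s :\ x != set0 then sg F (s :\ x) x * g (s :\ x) else 0).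
Proof.
rewrite /bdry_coef; under eq_bigr do rewrite mulr_suml.
rewrite exchange_big; apply: eq_bigr => x _.
rewrite (bigD1 (s :\ x)) //= eqxx /= big1 ?addr0; last first.
  by move=> t /negbTE ->; rewrite mul0r.
by case: ifP => _; rewrite ?mul0r.
Qed.

Lemma Df_nz (F : fieldType) (V : finType) (s t : {set V}) :
  bdry_coef F s t != 0 -> exists2 x, x \in s & (t = s :\ x) /\ t != set0.
Proof.
rewrite /bdry_coef => nz.
case: (pickP (fun x => [&& x \in s, t == s :\ x & t != set0])) =>
  [x /and3P[xs /eqP ht ne] | H]; first by exists x.
move: nz; rewrite big1 ?eqxx // => x xs; case: ifP => // /andP[ht ne].
by move: (H x); rewrite xs ht ne.
Qed.

Lemma antisym_sum (F : fieldType) (V : finType) (s : {set V}) (G : V -> V -> F) :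
  (forall x y, x \in s -> y \in s -> x != y -> G x y + G y x = 0) ->
  \sum_(x in s) \sum_(y in s :\ x) G x y = 0.
Proof.
move=> HG.
have E : forall x, x \in s -> \sum_(y in s :\ x) G x y =
   \sum_(y in s | (enum_rank y < enum_rank x)%N) G x y +
   \sum_(y in s | (enum_rank x < enum_rank y)%N) G x y.
  move=> x xs; rewrite (bigID (fun y => (enum_rank y < enum_rank x)%N)) /=.
  congr (_ + _); apply: eq_bigl => y; rewrite !inE.
    by case: (eqVneq y x) => [->|_]; rewrite ?ltnn ?andbF ?andbT.
  case: (eqVneq y x) => [->|nyx]; first by rewrite ltnn !andbF.
  case: (y \in s); rewrite /= ?andbF //; have := ltb_sum nyx.
  by case: (enum_rank y < enum_rank x)%N; case: (enum_rank x < enum_rank y)%N.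
rewrite (eq_bigr _ E) big_split /=.
rewrite [X in _ + X](exchange_big_dep (fun y => y \in s)); last by move=> ? ? ? /andP[].
rewrite [X in _ + X](eq_bigr (fun j => \sum_(i in s | (enum_rank i < enum_rank j)%N) G i j)); last first.
  by move=> j js; apply: eq_bigl => i; rewrite js.
rewrite -big_split /= big1 // => x xs.
rewrite -big_split /= big1 // => y /andP[ys lt].
apply: HG => //; apply/eqP => exy; by rewrite exy ltnn in lt.
Qed.

Lemma sign_cancel2 (F : fieldType) (b1 b2 : bool) (a b : nat) :
  (b1 + b2 = 1)%N ->
  (-1) ^+ (b1 + a) * (-1) ^+ b + (-1) ^+ (b2 + b) * (-1) ^+ a = 0 :> F.
Proof. by case: b1; case: b2 => //= _; rewrite ?add0n ?add1n !exprS; ring. Qed.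

Lemma DD (F : fieldType) (V : finType) (s r : {set V}) :
  \sum_(t : {set V}) bdry_coef F s t * bdry_coef F t r = 0.
Proof.
rewrite Df_sum.
pose G x y := if (r == s :\ x :\ y) && (r != set0)
              then sg F (s :\ x) x * sg F r y else 0.
rewrite (eq_bigr (fun x => \sum_(y in s :\ x) G x y)); last first.
  move=> x xs; case: ifP => [_|/negbFE/eqP ->]; last by rewrite big_set0.
  rewrite /bdry_coef mulr_sumr; apply: eq_bigr => y _.
  by rewrite /G; case: ifP; rewrite ?mulr0.
apply: antisym_sum => x y xs ys nxy; rewrite /G.
have ->: s :\ y :\ x = s :\ x :\ y by rewrite setDDl setUC -setDDl.
case: ifP => [/andP[/eqP rE _]|_]; last by rewrite addr0.
have yx : y \in s :\ x by rewrite !inE eq_sym nxy.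
have xy : x \in s :\ y by rewrite !inE nxy.
rewrite /sg (nb_D1 x yx) (nb_D1 y xy).
have ->: s :\ y :\ x = s :\ x :\ y by rewrite setDDl setUC -setDDl.
rewrite -rE; apply: sign_cancel2.
by rewrite addnC ltb_sum.
Qed.

Definition Hf (F : fieldType) (V : finType) (u v : V) (t r : {set V}) : F :=
  if [&& u \in t, v \notin t & r == v |: t] then sg F t v else 0.

Definition Rf (F : fieldType) (V : finType) (u v : V) (s r : {set V}) : F :=
  (s == r)%:R - \sum_(t : {set V}) Hf F u v s t * bdry_coef F t r
              - \sum_(t : {set V}) bdry_coef F s t * Hf F u v t r.

Lemma Hf_sum (F : fieldType) (V : finType) (u v : V) (s : {set V}) (g : {set V} -> F) :
  \sum_(t : {set V}) Hf F u v s t * g t =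
  if (u \in s) && (v \notin s) then sg F s v * g (v |: s) else 0.
Proof.
case: ifP => [/andP[us vs]|h].
  rewrite (bigD1 (v |: s)) //= /Hf us vs eqxx /= big1 ?addr0 // => t.
  by rewrite eq_sym => /negbTE ->; rewrite mul0r.
rewrite big1 // => t _; rewrite /Hf; case: ifP; rewrite ?mul0r //.
by case/and3P => us vs _; rewrite us vs in h.
Qed.

Lemma Rf_free (F : fieldType) (V : finType) (u v : V) (s r : {set V}) :
  u \notin s -> Rf F u v s r = (s == r)%:R.
Proof.
move=> us; rewrite /Rf Hf_sum (negbTE us) /= Df_sum big1 ?subr0 // => x xs.
case: ifP => // _; rewrite /Hf !inE (negbTE us) andbF /=; by rewrite mulr0.
Qed.

Lemma sign_cancel3 (F : fieldType) (b1 b2 : bool) (a b : nat) :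
  (b1 + b2 = 1)%N ->
  (-1) ^+ (b1 + a) * (-1) ^+ (b2 + b) + (-1) ^+ b * (-1) ^+ a = 0 :> F.
Proof. by case: b1; case: b2 => //= _; rewrite ?add0n ?add1n !exprS; ring. Qed.

Lemma bdry_coef_sg (F : fieldType) (V : finType) (s t : {set V}) :
  bdry_coef F s t = \sum_(x in s) if (t == s :\ x) && (t != set0) then sg F t x else 0.
Proof. by []. Qed.

Lemma Rf_u (F : fieldType) (V : finType) (u v : V) (s r : {set V}) :
  u != v -> u \in r -> Rf F u v s r = 0.
Proof.
move=> nuv ur.
case us: (u \in s); last first.
  rewrite Rf_free ?us //; case: eqP => // sr; by rewrite sr ur in us.
case vs: (v \in s).
  rewrite /Rf Hf_sum us vs /= subr0 Df_sum (bigD1 v) //=.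
  have uD : u \in s :\ v by rewrite !inE nuv.
  have -> : s :\ v != set0 by apply/set0Pn; exists u.
  rewrite big1 ?addr0; last first.
    move=> x /andP[xs nxv]; case: ifP => // _.
    by rewrite /Hf !inE vs /= (eq_sym v x) nxv /= andbF mulr0.
  rewrite /Hf uD !inE eqxx /= setD1K //.
  by rewrite eq_sym; case: (r == s); rewrite ?mulr0 ?sgsq ?subrr.
rewrite /Rf Hf_sum us vs /= Df_sum.
rewrite bdry_coef_sg (bigD1 v) ?setU11 //= setU1K ?vs //.
rewrite (eq_bigl (fun x => x \in s)); last first.
  by move=> x /=; rewrite !inE; case: (eqVneq x v) => [->|]; rewrite ?vs ?andbT ?andbF.
have rn : r != set0 by apply/set0Pn; exists u.
rewrite rn !andbT mulrDr.
have -> : sg F s v * (if r == s then sg F r v else 0) = (r == s)%:R.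
  by case: eqP => [->|_]; rewrite ?sgsq ?mulr0.
rewrite [s == r]eq_sym; rewrite opprD addrA subrr sub0r -opprD mulr_sumr -big_split /= big1 ?oppr0 //.
move=> x xs.
have nxv : x != v by apply: contraFN vs => /eqP <-.
have -> : (v |: s) :\ x = v |: (s :\ x).
  by apply/setP => w; rewrite !inE; case: eqP => // ->; rewrite (negbTE nxv).
rewrite andbT.
case: (eqVneq r (v |: (s :\ x))) => [rE|rnE]; last first.
  rewrite mulr0 add0r; case: ifP => // _.
  by rewrite /Hf (negbTE rnE) !andbF mulr0.
have uD : u \in s :\ x by move: ur; rewrite rE !inE (negbTE nuv).
have vD : v \notin s :\ x by rewrite !inE vs andbF.
have -> : s :\ x != set0 by apply/set0Pn; exists u.
rewrite /Hf uD vD rE eqxx /= /sg.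
rewrite (nb_D1 v xs) (nb_D1 x (setU11 v (s :\ x))) setU1K //.
by apply: sign_cancel3; rewrite ltb_sum.
Qed.

Lemma sum_sets (F : fieldType) (V : finType) (G : {set V} -> F) :
  \sum_(k < #|{set V}|) G (enum_val k) = \sum_(t : {set V}) G t.
Proof. by rewrite (big_enum_val G). Qed.

Definition Hm (F : fieldType) (V : finType) (u v : V) : 'M[F]_#|{set V}| :=
  \matrix_(i, j) Hf F u v (enum_val i) (enum_val j).

Definition Rm (F : fieldType) (V : finType) (u v : V) : 'M[F]_#|{set V}| :=
  1%:M - Hm F u v *m bdry_mx F V - bdry_mx F V *m Hm F u v.

Lemma DmDm (F : fieldType) (V : finType) : bdry_mx F V *m bdry_mx F V = 0.
Proof.
apply/matrixP => i j; rewrite !mxE.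
under eq_bigr do rewrite !mxE.
rewrite (sum_sets (fun t => bdry_coef F (enum_val i) t * bdry_coef F t (enum_val j))).
exact: DD.
Qed.

Lemma RmE (F : fieldType) (V : finType) (u v : V) i j :
  Rm F u v i j = Rf F u v (enum_val i) (enum_val j).
Proof.
rewrite /Rm /Rf !mxE (inj_eq (@enum_val_inj _ _)).
under eq_bigr do rewrite !mxE.
rewrite (sum_sets (fun t => Hf F u v (enum_val i) t * bdry_coef F t (enum_val j))).
under [X in _ - _ - X]eq_bigr do rewrite !mxE.
by rewrite (sum_sets (fun t => bdry_coef F (enum_val i) t * Hf F u v t (enum_val j))).
Qed.

Lemma RD (F : fieldType) (V : finType) (u v : V) :
  Rm F u v *m bdry_mx F V = bdry_mx F V *m Rm F u v.
Proof.
rewrite /Rm !mulmxBl !mulmxBr mul1mx mulmx1 -!mulmxA DmDm mulmx0.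
by rewrite !mulmxA DmDm mul0mx !subr0.
Qed.

Definition supp (F : fieldType) (V : finType) (P : pred {set V})
  (x : 'rV[F]_#|{set V}|) := forall i, x 0 i != 0 -> P (enum_val i).

Lemma supp_mul (F : fieldType) (V : finType) (P Q : pred {set V})
  (M : 'M[F]_#|{set V}|) (x : 'rV[F]_#|{set V}|) :
  (forall i j, M i j != 0 -> P (enum_val i) -> Q (enum_val j)) ->
  supp P x -> supp Q (x *m M).
Proof.
move=> HM Hx j; rewrite !mxE => nz.
have [i _ ] : exists2 i, true & x 0 i * M i j != 0.
  case: (pickP (fun i => x 0 i * M i j != 0)) => [i h|h]; first by exists i.
  by move: nz; rewrite big1 ?eqxx // => i _; move: (h i) => /negbFE/eqP.
rewrite mulf_eq0 negb_or => /andP[xi Mij].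
exact: HM Mij (Hx i xi).
Qed.

Definition Pk (V : finType) (e : rel V) (S : {set V}) (n : nat) (t : {set V}) :=
  [&& t \subset S, #|t| == n & is_clique e t].

Lemma chainsP (F : fieldType) (V : finType) (e : rel V) (S : {set V}) k
  (x : 'rV[F]_#|{set V}|) :
  (x <= chains F e S k)%MS <-> supp (Pk e S k.+1) x.
Proof.
split => [sx | Hx]; last first.
  rewrite (row_sum_delta x); apply: summx_sub => i _.
  case: (eqVneq (x 0 i) 0) => [->|nz]; first by rewrite scale0r sub0mx.
  apply: scalemx_sub; apply: (sumsmx_sup (enum_val i)); first exact: Hx.
  by rewrite enum_valK genmxE submx_refl.
pose d : 'rV[F]_#|{set V}| :=
  \row_j (if Pk e S k.+1 (enum_val j) then 0 else 1).
have sK : (chains F e S k <= kermx (diag_mx d))%MS.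
  apply/sumsmx_subP => s Ps; rewrite genmxE sub_kermx mul_mx_diag.
  apply/eqP/matrixP => a j; rewrite !mxE.
  case: (eqVneq j (enum_rank s)) => [->|nj]; last by rewrite andbF mul0r.
  by rewrite enum_rankK; rewrite /Pk; move: Ps; rewrite /simplex => ->; rewrite mulr0.
have := submx_trans sx sK; rewrite sub_kermx mul_mx_diag => /eqP/matrixP H i nz.
move: (H 0 i); rewrite !mxE; case: ifP => // _; rewrite mulr1 => xi.
by rewrite xi eqxx in nz.
Qed.

Lemma is_cliqueP (V : finType) (e : rel V) (t : {set V}) :
  reflect (forall x y, x \in t -> y \in t -> x != y -> e x y) (is_clique e t).
Proof.
apply: (iffP forall_inP) => [H x y xt yt nxy | H x xt].
  by move: (H x xt) => /forall_inP /(_ y yt) /implyP; apply.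
by apply/forall_inP => y yt; apply/implyP; apply: H.
Qed.

Lemma PkD (F : fieldType) (V : finType) (e : rel V) (S : {set V}) n (s t : {set V}) :
  bdry_coef F s t != 0 -> Pk e S n.+1 s -> Pk e S n t.
Proof.
case/Df_nz => x xs [-> _] /and3P[sS cs cl].
apply/and3P; split.
- exact: subset_trans (subD1set s x) sS.
- by move: cs; rewrite (cardsD1 x) xs.
- apply/is_cliqueP => a b; rewrite !inE => /andP[_ a_s] /andP[_ b_s].
  by move/is_cliqueP: cl; apply.
Qed.

Lemma PkH (F : fieldType) (V : finType) (e : rel V) (He_sym : symmetric e)
  (u v : V) (S : {set V}) n (t r : {set V}) :
  dominated e u v -> (u \in S -> v \in S) ->
  Hf F u v t r != 0 -> Pk e S n t -> Pk e S n.+1 r.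
Proof.
case=> nvu sN hS; rewrite /Hf; case: ifP; last by rewrite eqxx.
case/and3P => ut vt /eqP -> _ /and3P[tS ct cl].
have uS : u \in S by apply: (subsetP tS).
have vN : forall y, y \in t -> y != v -> e v y.
  move=> y yt nyv.
  have : y \in closed_nbhd e u.
    rewrite inE; case: (eqVneq y u) => //= nyu.
    by move/is_cliqueP: cl; apply => //; rewrite eq_sym.
  by move/(subsetP sN); rewrite inE (negbTE nyv).
apply/and3P; split.
- by rewrite subUset sub1set hS.
- by rewrite cardsU1 vt (eqP ct).
- apply/is_cliqueP => a b; rewrite !inE.
  case/orP => [/eqP -> | aT]; case/orP => [/eqP -> | bt]; rewrite ?eqxx //.
  + by move=> nvb; apply: vN; rewrite // eq_sym.
  + by move=> nav; rewrite He_sym; apply: vN.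
  + by move/is_cliqueP: cl; apply.
Qed.

Lemma supp_and (F : fieldType) (V : finType) (P Q : pred {set V}) (x : 'rV[F]_#|{set V}|) :
  supp P x -> supp Q x -> supp (fun t => P t && Q t) x :> Prop.
Proof. by move=> HP HQ i nz; rewrite HP ?HQ. Qed.

Lemma chains_mono (F : fieldType) (V : finType) (e : rel V) (S1 S2 : {set V}) n :
  S1 \subset S2 -> (chains F e S1 n <= chains F e S2 n)%MS.
Proof.
move=> sS; apply/sumsmx_subP => s /and3P[s1 c cl].
by apply: (sumsmx_sup s) => //; apply/and3P; split => //; apply: subset_trans sS.
Qed.

Lemma R_into (F : fieldType) (V : finType) (e : rel V) (He_sym : symmetric e)
  (u v : V) (S : {set V}) k (x : 'rV[F]_#|{set V}|) :
  dominated e u v -> (u \in S -> v \in S) -> (x <= chains F e S k)%MS ->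
  (x *m Rm F u v <= chains F e (S :\ u) k)%MS.
Proof.
move=> dom hS /chainsP Hx.
have nuv : u != v by case: dom => h _; rewrite eq_sym.
have HH : forall n i j, Hm F u v i j != 0 -> Pk e S n (enum_val i) ->
    Pk e S n.+1 (enum_val j).
  by move=> n i j; rewrite mxE; apply: PkH.
have HD : forall n i j, bdry_mx F V i j != 0 -> Pk e S n.+1 (enum_val i) ->
    Pk e S n (enum_val j).
  by move=> n i j; rewrite mxE; apply: PkD.
have c1 : (x *m Rm F u v <= chains F e S k)%MS.
  rewrite /Rm !mulmxBr mulmx1 !mulmxA.
  apply: addmx_sub; first apply: addmx_sub.
  - by apply/chainsP.
  - rewrite eqmx_opp; apply/chainsP.
    by apply: (supp_mul (HD _)); apply: (supp_mul (HH _)).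
  - rewrite eqmx_opp; apply/chainsP.
    by apply: (supp_mul (HH _)); apply: (supp_mul (HD _)).
move/chainsP: c1 => H1.
have H2 : supp (fun t => u \notin t) (x *m Rm F u v).
  apply: (@supp_mul _ _ predT) => //.
  move=> i j nz _; apply/negP => uj; move: nz.
  by rewrite RmE Rf_u ?eqxx.
apply/chainsP => i nz.
case/and3P: (H1 i nz) => sS c cl; apply/and3P; split => //.
by rewrite subsetD1 sS H2.
Qed.

Lemma R_fix (F : fieldType) (V : finType) (u v : V) (x : 'rV[F]_#|{set V}|) :
  supp (fun t => u \notin t) x -> x *m Rm F u v = x.
Proof.
move=> Hx; rewrite -[RHS]mulmx1; apply/matrixP => a j; rewrite !mxE.
apply: eq_bigr => i _; case: (eqVneq (x a i) 0) => [->|nz]; first by rewrite !mul0r.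
rewrite RmE Rf_free; last by apply: Hx; rewrite (ord1 a) in nz.
by rewrite !mxE (inj_eq (@enum_val_inj _ _)).
Qed.

Lemma H_chains (F : fieldType) (V : finType) (e : rel V) (He_sym : symmetric e)
  (u v : V) (S : {set V}) k (x : 'rV[F]_#|{set V}|) :
  dominated e u v -> (u \in S -> v \in S) -> (x <= chains F e S k)%MS ->
  (x *m Hm F u v <= chains F e S k.+1)%MS.
Proof.
move=> dom hS /chainsP Hx; apply/chainsP; apply: supp_mul Hx.
by move=> i j; rewrite mxE; apply: PkH.
Qed.

Lemma key (F : fieldType) (V : finType) (e : rel V) (He_sym : symmetric e)
  (u v : V) (S T : {set V}) k :
  dominated e u v -> S \subset T -> (u \in S -> v \in S) -> (u \in T -> v \in T) ->
  (\rank (cycles F e S k + boundaries F e T k) - \rank (boundaries F e T k))%N =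
  (\rank (cycles F e (S :\ u) k + boundaries F e (T :\ u) k)
     - \rank (boundaries F e (T :\ u) k))%N.
Proof.
move=> dom sST hS hT.
set A := cycles F e (S :\ u) k; set B := boundaries F e (T :\ u) k.
set A' := cycles F e S k; set B' := boundaries F e T k.
have h1 : (A <= A')%MS.
  by apply: capmxS => //; apply: chains_mono; apply: subD1set.
have h2 : (B <= B')%MS.
  by apply: submxMr; apply: chains_mono; apply: subD1set.
have h3 : (A' <= A + B')%MS.
  apply/row_subP => i; set z := row i A'.
  have : (z <= A')%MS by apply: row_sub.
  rewrite sub_capmx sub_kermx => /andP[zC /eqP zD].
  have zE : z = z *m Rm F u v + z *m Hm F u v *m bdry_mx F V.
    rewrite /Rm !mulmxBr mulmx1 !mulmxA zD mul0mx subr0.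
    by rewrite addrNK.
  rewrite zE; apply: addmx_sub_adds.
    rewrite sub_capmx (R_into He_sym dom hS zC) sub_kermx.
    by rewrite -mulmxA RD mulmxA zD mul0mx eqxx.
  apply: submxMr; apply: submx_trans (chains_mono _ _ _ sST).
  exact: H_chains.
have h4 : ((A :&: B')%MS <= B)%MS.
  apply/row_subP => i; set w := row i (A :&: B')%MS.
  have : (w <= A :&: B')%MS by apply: row_sub.
  rewrite !sub_capmx => /andP[/andP[wC _] /submxP[c0 wE]].
  set c := c0 *m chains F e T k.+1.
  have cC : (c <= chains F e T k.+1)%MS by apply: submxMl.
  have wE' : w = c *m bdry_mx F V by rewrite wE mulmxA.
  have wf : supp (fun t => u \notin t) w.
    move/chainsP: wC => H j nz; case/and3P: (H j nz).
    by rewrite subsetD1 => /andP[].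
  rewrite -(R_fix v wf) wE' -mulmxA -RD mulmxA.
  by apply: submxMr; apply: R_into.
have e1 : \rank (A' + B') = \rank (A + B').
  apply: eqmx_rank; apply/andP; split.
    by rewrite addsmx_sub h3 addsmxSr.
  by apply: addsmxS.
have e2 : \rank (A :&: B')%MS = \rank (A :&: B)%MS.
  apply: eqmx_rank; apply/andP; split.
    by rewrite sub_capmx capmxSl h4.
  by apply: capmxS.
have := mxrank_sum_cap A B'; have := mxrank_sum_cap A B.
rewrite e1 e2; lia.
Qed.

Theorem mainTheorem5 (F : fieldType) (R : realFieldType) (V : finType)
  (e : rel V) (He_sym : symmetric e) (He_irr : irreflexive e) :
  (forall (f : V -> R) (m : nat) (a : nat -> R),
     (forall i j : nat, (i < j <= m)%N -> a i < a j) ->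
     (forall w : V, a 0%N <= f w <= a m) ->
     forall u v : V, dominated e u v -> f u <= f v ->
     forall k : nat,
       PD F e [set: V] f m a k = PD F e ([set: V] :\ u) f m a k)
  /\
  (forall (m : nat) (a : nat -> R),
     (forall i j : nat, (i < j <= m)%N -> a i < a j) ->
     (forall w : V, a 0%N <= degree_fun R e w <= a m) ->
     forall u v : V, dominated e u v ->
     forall k : nat,
       PD F e [set: V] (degree_fun R e) m a k
       = PD F e ([set: V] :\ u) (degree_fun R e) m a k).
Proof.
have P1 : forall (f : V -> R) (m : nat) (a : nat -> R),
     (forall i j : nat, (i < j <= m)%N -> a i < a j) ->
     forall u v : V, dominated e u v -> f u <= f v ->
     forall k : nat,
       PD F e [set: V] f m a k = PD F e ([set: V] :\ u) f m a k.
  move=> f m a ha u v dom fuv k.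
  have Hb : pbetti F e [set: V] f m a k = pbetti F e ([set: V] :\ u) f m a k.
    apply: functional_extensionality => i; apply: functional_extensionality => j.
    rewrite /pbetti; case: ifP => // /andP[ij jm].
    have fE : forall l, filt ([set: V] :\ u) f m a l = filt [set: V] f m a l :\ u.
      by move=> l; apply/setP => w; rewrite !inE andbT.
    rewrite !fE; apply: (@key F V e He_sym u v) => //.
    - apply/subsetP => w; rewrite !inE => h; apply: le_trans h.
      case: (eqVneq i j) => [-> //|nij].
      by apply/ltW/ha; apply/andP; split; lia.
    - by rewrite !inE => h; apply: le_trans fuv.
    - by rewrite !inE => h; apply: le_trans fuv.
  by rewrite /PD Hb.
split; first by move=> f m a ha _; apply: P1.
move=> m a ha _ u v dom k; apply: (P1 _ _ _ ha u v dom _ k).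
have cN : forall w, #|closed_nbhd e w| = (#|[set x | e w x]|).+1.
  move=> w; have -> : closed_nbhd e w = w |: [set x | e w x].
    by apply/setP => x; rewrite !inE.
  by rewrite cardsU1 inE He_irr.
rewrite /degree_fun ler_nat -ltnS -!cN.
by apply: subset_leq_card; case: dom.
Qed.
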